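(* For every positive integer $n$ and every real $x$, \begin{align*} \sum_{k=1}^n\frac{((4x-27)k^2+(2x+27)k-2x-6)x^k}{(2k-1)\binom{3k}k}&=-2x+2(n+1)\frac{x^{n+1}}{\binom{3n}n},\\ \sum_{k=1}^n\frac{((4x-27)k^2+(27-2x)k-6)x^k}{k(2k-1)\binom{3k}k}&=-2x+\frac{2x^{n+1}}{\binom{3n}n},\\ \sum_{k=1}^n\frac{(2(x-16)k^2+(x+32)k-x-6)x^k}{(2k-1)\binom{4k}{2k}}&=-x+(n+1)\frac{x^{n+1}}{\binom{4n}{2n}},\\ \sum_{k=1}^n\frac{(2(x-16)k^2+(32-x)k-6)x^k}{k(2k-1)\binom{4k}{2k}}&=-x+\frac{x^{n+1}}{\binom{4n}{2n}},\\ \sum_{k=1}^n\frac{((4x-27)k^2+(6x+27)k+2x-6)x^k}{\binom{3k}k}&=-2x+\frac{2(n+1)(2n+1)x^{n+1}}{\binom{3n}n},\\ \sum_{k=1}^n\frac{(2(x-16)k^2+(3x+32)k+x-6)x^k}{\binom{4k}{2k}}&=-x+\frac{(n+1)(2n+1)x^{n+1}}{\binom{4n}{2n}}. \end{align*} *)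

(* Defs.v *)
From mathcomp Require Import all_boot all_order all_algebra.
Set Implicit Arguments. Unset Strict Implicit. Unset Printing Implicit Defensive.

(* Main.v *)
Require Import Defs.
From mathcomp Require Import all_boot all_order all_algebra.
From mathcomp Require Import ring lra zify.
Import Order.TTheory GRing.Theory Num.Theory.
Local Open Scope ring_scope.

Lemma fact_neq0 (R : numFieldType) k : (k`!)%:R != 0 :> R.
Proof. by rewrite pnatr_eq0 -lt0n fact_gt0. Qed.

Lemma bin3R (R : realFieldType) n :
  'C(3 * n.+1, n.+1)%:R = 'C(3 * n, n)%:R * (3 * (3 * n%:R + 2) * (3 * n%:R + 1))
     / (2 * (n%:R + 1) * (2 * n%:R + 1)) :> R.
Proof.
have h1 := @bin_fact (3 * n.+1) n.+1 ltac:(lia).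
have h2 := @bin_fact (3 * n) n ltac:(lia).
have e1 : (3 * n.+1 - n.+1 = (2*n).+2)%N by lia.
have e2 : (3 * n - n = 2*n)%N by lia.
have e3 : (3 * n.+1 = (3*n).+3)%N by lia.
rewrite e1 e3 in h1; rewrite e2 in h2.
rewrite e3.
move: h1 h2; rewrite !factS => h1 h2.
have {h1}h1 := congr1 (fun k : nat => (k%:R : R)) h1.
have {h2}h2 := congr1 (fun k : nat => (k%:R : R)) h2.
move: h1 h2 => /=; rewrite !natrM -!natr1 !natrM => h1 h2.
have hf := fact_neq0 R n. have hg := fact_neq0 R (2*n).
set C := 'C(_, _)%:R in h1 *. set D := 'C(_, _)%:R in h2 *.
set F := (n`!)%:R in h1 h2 hf. set G := ((2*n)`!)%:R in h1 h2 hg.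
set H := ((3*n)`!)%:R in h1 h2.
have m0 : 0 <= n%:R :> R by apply: ler0n.
have nz : (n%:R + 1) * F * ((2 * n%:R + 1 + 1) * ((2 * n%:R + 1) * G)) != 0.
  rewrite !mulf_neq0 //; apply: lt0r_neq0; lra.
apply: (mulIf nz). rewrite h1 -h2. field.
by apply/andP; split; apply: lt0r_neq0; lra.
Qed.

Lemma bin4R (R : realFieldType) n :
  'C(4 * n.+1, 2 * n.+1)%:R = 'C(4 * n, 2 * n)%:R * (2 * (4 * n%:R + 3) * (4 * n%:R + 1))
     / ((n%:R + 1) * (2 * n%:R + 1)) :> R.
Proof.
have h1 := @bin_fact (4 * n.+1) (2 * n.+1) ltac:(lia).
have h2 := @bin_fact (4 * n) (2 * n) ltac:(lia).
have e1 : (4 * n.+1 - 2 * n.+1 = (2*n).+2)%N by lia.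
have e2 : (4 * n - 2 * n = 2*n)%N by lia.
have e3 : (4 * n.+1 = (4*n).+4)%N by lia.
have e4 : (2 * n.+1 = (2*n).+2)%N by lia.
rewrite e1 e3 e4 in h1; rewrite e2 in h2.
rewrite e3 e4.
move: h1 h2; rewrite !factS => h1 h2.
have {h1}h1 := congr1 (fun k : nat => (k%:R : R)) h1.
have {h2}h2 := congr1 (fun k : nat => (k%:R : R)) h2.
move: h1 h2 => /=; rewrite !natrM -!natr1 !natrM => h1 h2.
have hg := fact_neq0 R (2*n).
set C := 'C(_, _)%:R in h1 *. set D := 'C(_, _)%:R in h2 *.
set G := ((2*n)`!)%:R in h1 h2 hg.
set H := ((4*n)`!)%:R in h1 h2.
have m0 : 0 <= n%:R :> R by apply: ler0n.
have nz : ((2 * n%:R + 1 + 1) * ((2 * n%:R + 1) * G)) * ((2 * n%:R + 1 + 1) * ((2 * n%:R + 1) * G)) != 0.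
  rewrite !mulf_neq0 //; apply: lt0r_neq0; lra.
apply: (mulIf nz). rewrite h1 -h2. field.
by apply/andP; split; apply: lt0r_neq0; lra.
Qed.

Ltac base := rewrite big_geq // ?muln0 bin0 /=; field.
Ltac nzs := repeat (apply/andP; split); try done; apply: lt0r_neq0; lra.

Lemma id1 (R : realFieldType) (n : nat) (x : R) :
  \sum_(1 <= k < n.+1)
        (((4 * x - 27) * k%:R ^+ 2 + (2 * x + 27) * k%:R - 2 * x - 6) * x ^+ k)
        / ((2 * k%:R - 1) * 'C(3 * k, k)%:R)
      = - 2 * x + 2 * n.+1%:R * x ^+ n.+1 / 'C(3 * n, n)%:R.
Proof.
elim: n => [|n IH]; first by base.
have hD : 'C(3 * n, n)%:R != 0 :> R by rewrite pnatr_eq0 -lt0n bin_gt0; lia.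
have m0 : 0 <= n%:R :> R by apply: ler0n.
rewrite big_nat_recr //= IH bin3R -!natr1 !exprS.
field. nzs.
Qed.

Lemma id2 (R : realFieldType) (n : nat) (x : R) :
  \sum_(1 <= k < n.+1)
        (((4 * x - 27) * k%:R ^+ 2 + (27 - 2 * x) * k%:R - 6) * x ^+ k)
        / (k%:R * (2 * k%:R - 1) * 'C(3 * k, k)%:R)
      = - 2 * x + 2 * x ^+ n.+1 / 'C(3 * n, n)%:R.
Proof.
elim: n => [|n IH]; first by base.
have hD : 'C(3 * n, n)%:R != 0 :> R by rewrite pnatr_eq0 -lt0n bin_gt0; lia.
have m0 : 0 <= n%:R :> R by apply: ler0n.
rewrite big_nat_recr //= IH bin3R -!natr1 !exprS.
field. nzs.
Qed.

Lemma id3 (R : realFieldType) (n : nat) (x : R) :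
  \sum_(1 <= k < n.+1)
        ((2 * (x - 16) * k%:R ^+ 2 + (x + 32) * k%:R - x - 6) * x ^+ k)
        / ((2 * k%:R - 1) * 'C(4 * k, 2 * k)%:R)
      = - x + n.+1%:R * x ^+ n.+1 / 'C(4 * n, 2 * n)%:R.
Proof.
elim: n => [|n IH]; first by base.
have hD : 'C(4 * n, 2 * n)%:R != 0 :> R by rewrite pnatr_eq0 -lt0n bin_gt0; lia.
have m0 : 0 <= n%:R :> R by apply: ler0n.
rewrite big_nat_recr //= IH bin4R -!natr1 !exprS.
field. nzs.
Qed.

Lemma id4 (R : realFieldType) (n : nat) (x : R) :
  \sum_(1 <= k < n.+1)
        ((2 * (x - 16) * k%:R ^+ 2 + (32 - x) * k%:R - 6) * x ^+ k)
        / (k%:R * (2 * k%:R - 1) * 'C(4 * k, 2 * k)%:R)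
      = - x + x ^+ n.+1 / 'C(4 * n, 2 * n)%:R.
Proof.
elim: n => [|n IH]; first by base.
have hD : 'C(4 * n, 2 * n)%:R != 0 :> R by rewrite pnatr_eq0 -lt0n bin_gt0; lia.
have m0 : 0 <= n%:R :> R by apply: ler0n.
rewrite big_nat_recr //= IH bin4R -!natr1 !exprS.
field. nzs.
Qed.

Lemma id5 (R : realFieldType) (n : nat) (x : R) :
  \sum_(1 <= k < n.+1)
        (((4 * x - 27) * k%:R ^+ 2 + (6 * x + 27) * k%:R + 2 * x - 6) * x ^+ k)
        / 'C(3 * k, k)%:R
      = - 2 * x + 2 * n.+1%:R * (2 * n%:R + 1) * x ^+ n.+1 / 'C(3 * n, n)%:R.
Proof.
elim: n => [|n IH]; first by base.
have hD : 'C(3 * n, n)%:R != 0 :> R by rewrite pnatr_eq0 -lt0n bin_gt0; lia.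
have m0 : 0 <= n%:R :> R by apply: ler0n.
rewrite big_nat_recr //= IH bin3R -!natr1 !exprS.
field. nzs.
Qed.

Lemma id6 (R : realFieldType) (n : nat) (x : R) :
  \sum_(1 <= k < n.+1)
        ((2 * (x - 16) * k%:R ^+ 2 + (3 * x + 32) * k%:R + x - 6) * x ^+ k)
        / 'C(4 * k, 2 * k)%:R
      = - x + n.+1%:R * (2 * n%:R + 1) * x ^+ n.+1 / 'C(4 * n, 2 * n)%:R.
Proof.
elim: n => [|n IH]; first by base.
have hD : 'C(4 * n, 2 * n)%:R != 0 :> R by rewrite pnatr_eq0 -lt0n bin_gt0; lia.
have m0 : 0 <= n%:R :> R by apply: ler0n.
rewrite big_nat_recr //= IH bin4R -!natr1 !exprS.
field. nzs.
Qed.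

Theorem lemma6p1 (R : realFieldType) (n : nat) (x : R) (hn : (0 < n)%N) :
  (\sum_(1 <= k < n.+1)
        (((4 * x - 27) * k%:R ^+ 2 + (2 * x + 27) * k%:R - 2 * x - 6) * x ^+ k)
        / ((2 * k%:R - 1) * 'C(3 * k, k)%:R)
      = - 2 * x + 2 * n.+1%:R * x ^+ n.+1 / 'C(3 * n, n)%:R
  /\ \sum_(1 <= k < n.+1)
        (((4 * x - 27) * k%:R ^+ 2 + (27 - 2 * x) * k%:R - 6) * x ^+ k)
        / (k%:R * (2 * k%:R - 1) * 'C(3 * k, k)%:R)
      = - 2 * x + 2 * x ^+ n.+1 / 'C(3 * n, n)%:R
  /\ \sum_(1 <= k < n.+1)
        ((2 * (x - 16) * k%:R ^+ 2 + (x + 32) * k%:R - x - 6) * x ^+ k)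
        / ((2 * k%:R - 1) * 'C(4 * k, 2 * k)%:R)
      = - x + n.+1%:R * x ^+ n.+1 / 'C(4 * n, 2 * n)%:R
  /\ \sum_(1 <= k < n.+1)
        ((2 * (x - 16) * k%:R ^+ 2 + (32 - x) * k%:R - 6) * x ^+ k)
        / (k%:R * (2 * k%:R - 1) * 'C(4 * k, 2 * k)%:R)
      = - x + x ^+ n.+1 / 'C(4 * n, 2 * n)%:R
  /\ \sum_(1 <= k < n.+1)
        (((4 * x - 27) * k%:R ^+ 2 + (6 * x + 27) * k%:R + 2 * x - 6) * x ^+ k)
        / 'C(3 * k, k)%:R
      = - 2 * x + 2 * n.+1%:R * (2 * n%:R + 1) * x ^+ n.+1 / 'C(3 * n, n)%:R
  /\ \sum_(1 <= k < n.+1)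
        ((2 * (x - 16) * k%:R ^+ 2 + (3 * x + 32) * k%:R + x - 6) * x ^+ k)
        / 'C(4 * k, 2 * k)%:R
      = - x + n.+1%:R * (2 * n%:R + 1) * x ^+ n.+1 / 'C(4 * n, 2 * n)%:R).
Proof.
by split; [exact: id1|split; [exact: id2|split; [exact: id3|split; [exact: id4|split; [exact: id5|exact: id6]]]]].
Qed.
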